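(* Let $q\in\mathbb{C}\setminus\{0\}$, $\hat E_q(x)=\sum_{m\ge0}(-1)^mq^{m(m-1)/2}x^m$, and for $k\ge1$ let $P_k=\sum_{j=0}^{k-1}q^{j(j-1)/2}(-x)^j$. For every integer $n\ge2$, $$(x\sigma_q+1)\frac{1}{P_{n-1}}(x^2\sigma_q-1)\frac{1}{P_{n-2}}(x^3\sigma_q+1)\cdots\frac{1}{P_1}\left(x^n\sigma_q-(-1)^n\right)\hat E_q(x)^n=(-1)^{n(n-1)/2}P_n,$$ where the operator on the left is the composition, from left to right, of $\left(x\sigma_q+1\right)$ followed, for $i=2,\dots,n$, by $\frac{1}{P_{n+1-i}}\left(x^{i}\sigma_q-(-1)^{i}\right)$ (note $P_1=1$).
   Context: $\sigma_qf(x)=f(qx)$ acting on the field $\mathbb{C}[x^{-1}][[x]]$ of formal Laurent series; field elements act as multiplication operators and products of operators denote composition. *)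

(* Defs.v *)
(* Formal power series over a numeric closed field C
   (e.g. the complex numbers), represented by coefficient functions nat -> C. *)
From mathcomp Require Import all_boot all_order all_algebra.
Set Implicit Arguments. Unset Strict Implicit. Unset Printing Implicit Defensive.
Import Order.TTheory GRing.Theory Num.Theory.
Local Open Scope ring_scope.

Section PS.
Variable C : numClosedFieldType.

Definition ps := nat -> C.

Definition ps_one : ps := fun m => (m == 0)%:R.
Definition ps_add (f g : ps) : ps := fun m => f m + g m.
Definition ps_scale (c : C) (f : ps) : ps := fun m => c * f m.
Definition ps_mul (f g : ps) : ps :=
  fun m => \sum_(i < m.+1) f i * g (m - i)%N.
Fixpoint ps_pow (f : ps) (n : nat) : ps :=
  match n with 0 => ps_one | n'.+1 => ps_mul f (ps_pow f n') end.

Definition ps_xpow (i : nat) (f : ps) : ps :=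
  fun m => if (i <= m)%N then f (m - i)%N else 0.

(* sigma_q f (x) = f (q x) *)
Definition sigma_q (q : C) (f : ps) : ps := fun m => q ^+ m * f m.

Fixpoint inv_seq (f : ps) (n : nat) : seq C :=
  match n with
  | 0 => [:: (f 0%N)^-1]
  | n'.+1 => let s := inv_seq f n' in
      rcons s (- (f 0%N)^-1 * \sum_(i < n) f i.+1 * nth 0 s (n' - i)%N)
  end.
Definition ps_inv (f : ps) : ps := fun n => nth 0 (inv_seq f n) n.

Definition Ehat (q : C) : ps := fun m => (-1) ^+ m * q ^+ (m * m.-1)./2.

Definition Pk (q : C) (k : nat) : ps :=
  fun j => if (j < k)%N then q ^+ (j * j.-1)./2 * (-1) ^+ j else 0.

Definition factor (q : C) (n i : nat) (g : ps) : ps :=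
  if i == 1%N then ps_add (ps_xpow 1 (sigma_q q g)) g
  else ps_mul (ps_inv (Pk q (n + 1 - i)))
              (ps_add (ps_xpow i (sigma_q q g)) (ps_scale (- (-1) ^+ i) g)).

(* composition factor 1 o factor 2 o ... o factor n applied to g *)
Definition big_operator (q : C) (n : nat) (g : ps) : ps :=
  foldr (factor q n) g (iota 1 n).

End PS.

(* Main.v *)
From HB Require Import structures.
Require Import Defs.
From mathcomp Require Import all_boot all_order all_algebra.
From mathcomp Require Import boolp ring zify.
Set Implicit Arguments. Unset Strict Implicit. Unset Printing Implicit Defensive.
Import Order.TTheory GRing.Theory Num.Theory.
Local Open Scope ring_scope.
Section Inst.
Variable C : numClosedFieldType.
Definition ps_zero : ps C := fun _ => 0.
Definition ps_opp (f : ps C) : ps C := fun m => - f m.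
Lemma ps_addA : associative (@ps_add C).
Proof. by move=> f g h; apply: funext => m; rewrite /ps_add addrA. Qed.
Lemma ps_addC : commutative (@ps_add C).
Proof. by move=> f g; apply: funext => m; rewrite /ps_add addrC. Qed.
Lemma ps_add0 : left_id ps_zero (@ps_add C).
Proof. by move=> f; apply: funext => m; rewrite /ps_add /ps_zero add0r. Qed.
Lemma ps_addN : left_inverse ps_zero ps_opp (@ps_add C).
Proof. by move=> f; apply: funext => m; rewrite /ps_add /ps_zero /ps_opp addNr. Qed.

Definition tr (N : nat) (f : ps C) : {poly C} := \poly_(i < N.+1) f i.

Lemma trE N f i : (i <= N)%N -> (tr N f)`_i = f i.
Proof. by move=> h; rewrite coef_poly ltnS h. Qed.

Lemma mulE N f g j : (j <= N)%N -> ps_mul f g j = (tr N f * tr N g)`_j.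
Proof.
move=> hj; rewrite coefM /ps_mul; apply: eq_bigr => i _.
have hi : (i <= N)%N by apply: leq_trans hj; rewrite -ltnS.
by rewrite !trE //; apply: leq_trans hj; apply: leq_subr.
Qed.

Lemma ps_mulA : associative (@ps_mul C).
Proof.
move=> f g h; apply: funext => m.
rewrite (@mulE m (ps_mul f g) h m) // (@mulE m f (ps_mul g h) m) // coefM coefM.
have -> : \sum_(j < m.+1) (tr m (ps_mul f g))`_j * (tr m h)`_(m - j)
  = \sum_(j < m.+1) (tr m f * tr m g)`_j * (tr m h)`_(m - j).
  apply: eq_bigr => j _; have hj : (j <= m)%N by rewrite -ltnS.
  by rewrite (@trE m (ps_mul f g) j hj) (@mulE m f g j hj).
have -> : \sum_(j < m.+1) (tr m f)`_j * (tr m (ps_mul g h))`_(m - j)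
  = \sum_(j < m.+1) (tr m f)`_j * (tr m g * tr m h)`_(m - j).
  apply: eq_bigr => j _; have hj : (m - j <= m)%N by apply: leq_subr.
  by rewrite (@trE m (ps_mul g h) _ hj) (@mulE m g h _ hj).
by rewrite -!coefM mulrA.
Qed.

Lemma ps_mulC : commutative (@ps_mul C).
Proof.
by move=> f g; apply: funext => m; rewrite (@mulE m f g m) // (@mulE m g f m) // mulrC.
Qed.

Lemma ps_mul1 : left_id (@ps_one C) (@ps_mul C).
Proof.
move=> f; apply: funext => m; rewrite /ps_mul big_ord_recl /= /ps_one eqxx mul1r subn0.
rewrite big1 ?addr0 // => i _; by rewrite /bump /= mul0r.
Qed.

Lemma ps_mulDl : left_distributive (@ps_mul C) (@ps_add C).
Proof.
move=> f g h; apply: funext => m; rewrite /ps_mul /ps_add -big_split /=.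
by apply: eq_bigr => i _; rewrite mulrDl.
Qed.
End Inst.

HB.instance Definition _ (C : numClosedFieldType) := Choice.copy (ps C) (nat -> C).
HB.instance Definition _ (C : numClosedFieldType) :=
  GRing.isZmodule.Build (ps C) (@ps_addA C) (@ps_addC C) (@ps_add0 C) (@ps_addN C).
HB.instance Definition _ (C : numClosedFieldType) :=
  GRing.Zmodule_isComPzRing.Build (ps C) (@ps_mulA C) (@ps_mulC C) (@ps_mul1 C) (@ps_mulDl C).

Lemma ps_one_neq0 (C : numClosedFieldType) : (1 : ps C) != 0.
Proof.
apply/eqP => h; have := congr1 (fun f : ps C => f 0%N) h.
have -> : (1 : ps C) 0%N = 1 by [].
have -> : (0 : ps C) 0%N = 0 by [].
by move/eqP; rewrite oner_eq0.
Qed.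
HB.instance Definition _ (C : numClosedFieldType) :=
  GRing.PzSemiRing_isNonZero.Build (ps C) (@ps_one_neq0 C).


Section HS.
Variable R : comNzRingType.

Fixpoint hs (L : seq R) : nat -> R :=
  match L with
  | [::] => fun i => (i == 0)%:R
  | a :: X => fix g i := match i with 0 => 1 | i'.+1 => a * g i' + hs X i'.+1 end
  end.

Lemma hs0 L : hs L 0 = 1.
Proof. by case: L. Qed.

Lemma hsS a X i : hs (a :: X) i.+1 = a * hs (a :: X) i + hs X i.+1.
Proof. by []. Qed.

Lemma hs_single a i : hs [:: a] i = a ^+ i.
Proof. elim: i => [|i IH]; first by rewrite expr0. by rewrite hsS IH /= addr0 exprS. Qed.

Lemma hs_delta a b X i :
  hs (a :: X) i.+1 - hs (b :: X) i.+1 = (a - b) * hs (a :: b :: X) i.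
Proof.
elim: i => [|i IH].
  rewrite !hsS !hs0; ring.
rewrite [hs (a :: X) i.+2]hsS [hs (b :: X) i.+2]hsS [hs (a :: b :: X) i.+1]hsS.
transitivity (a * ((a - b) * hs (a :: b :: X) i) + (a - b) * hs (b :: X) i.+1);
  last by ring.
rewrite -IH; ring.
Qed.

Lemma hs_swap a b X i : hs (a :: b :: X) i = hs (b :: a :: X) i.
Proof.
elim: i => [|i IH]; first by rewrite !hs0.
rewrite hsS [hs (b :: a :: X) _]hsS IH.
have D := hs_delta a b X i.
rewrite hsS [hs (b :: X) _]hsS in D.
rewrite [hs (b :: X) _]hsS [hs (a :: X) _]hsS.
apply/eqP; rewrite -subr_eq0; apply/eqP.
rewrite -IH.
transitivity ((a - b) * hs (a :: b :: X) i - (a * hs (a :: X) i + hs X i.+1 - (b * hs (b :: X) i + hs X i.+1))); first by ring.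
by rewrite D subrr.
Qed.

Lemma hs_cons_congr a X Y : (forall j, hs X j = hs Y j) -> forall i, hs (a :: X) i = hs (a :: Y) i.
Proof.
move=> h; elim=> [|i IH]; first by rewrite !hs0.
by rewrite !hsS IH h.
Qed.

Lemma hs_rcons X b i : hs (rcons X b) i = hs (b :: X) i.
Proof.
elim: X i => [|c X IH] i //.
rewrite rcons_cons (@hs_cons_congr c (rcons X b) (b :: X) IH i).
by rewrite hs_swap.
Qed.

Lemma hs_scale c X i : hs (map (fun t => c * t) X) i = c ^+ i * hs X i.
Proof.
elim: X i => [|a X IH] i.
  by case: i => [|i] /=; rewrite ?expr0 ?mulr1 // mulr0.
rewrite map_cons.
elim: i => [|i IHi]; first by rewrite !hs0 expr0 mulr1.
rewrite hsS IH IHi [hs (a :: X) i.+1]hsS exprS; ring.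
Qed.

Lemma hs_morph (f : R -> R) : f 0 = 0 -> f 1 = 1 ->
  (forall x y, f (x + y) = f x + f y) -> (forall x y, f (x * y) = f x * f y) ->
  forall X i, f (hs X i) = hs (map f X) i.
Proof.
move=> f0 f1 fD fM; elim=> [|a X IH] i.
  by case: i => [|i] /=.
rewrite map_cons.
elim: i => [|i IHi]; first by rewrite !hs0.
by rewrite !hsS fD fM IHi IH.
Qed.
End HS.

Lemma half_succ m : ((m.+1 * m)./2 = (m * m.-1)./2 + m)%N.
Proof.
case: m => [|p] //.
rewrite [p.+1.-1]/=.
have -> : (p.+2 * p.+1 = p.+1 * p + (p.+1).*2)%N by nia.
by rewrite halfD odd_double andbF add0n doubleK.
Qed.

Section Main.
Variable C : numClosedFieldType.
Variable q : C.

Local Notation PS := (ps C).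

Definition Xs : PS := fun m => (m == 1%N)%:R.

Lemma xpow_succ i (f : PS) : ps_xpow i.+1 f = Xs * ps_xpow i f.
Proof.
apply: funext => m; rewrite /GRing.mul /=.
case: m => [|m].
  by rewrite /ps_mul big_ord_recl big_ord0 /ps_xpow /Xs /= mul0r addr0.
rewrite /ps_mul big_ord_recl big_ord_recl big1.
  rewrite /ps_xpow /Xs /= mul0r add0r mul1r addr0 subSS.
  by rewrite /bump /= subSS subn0.
move=> j _; by rewrite /Xs /= mul0r.
Qed.

Lemma xpowE i (f : PS) : ps_xpow i f = Xs ^+ i * f.
Proof.
elim: i => [|i IH].
  by rewrite expr0 mul1r; apply: funext => m; rewrite /ps_xpow leq0n subn0.
by rewrite xpow_succ IH exprS mulrA.
Qed.

Lemma sigma_add (f g : PS) : sigma_q q (f + g) = sigma_q q f + sigma_q q g.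
Proof. by apply: funext => m; rewrite /sigma_q /= /ps_add mulrDr. Qed.
Lemma sigma0 : sigma_q q (0 : PS) = 0.
Proof. by apply: funext => m; rewrite /sigma_q /= /ps_zero mulr0. Qed.
Lemma sigma1 : sigma_q q (1 : PS) = 1.
Proof.
apply: funext => m; rewrite /sigma_q /= /ps_one.
by case: m => [|m] /=; rewrite ?expr0 ?mulr1 ?mulr0.
Qed.
Lemma sigma_mul (f g : PS) : sigma_q q (f * g) = sigma_q q f * sigma_q q g.
Proof.
apply: funext => m.
change (q ^+ m * ps_mul f g m = ps_mul (sigma_q q f) (sigma_q q g) m).
rewrite /ps_mul /sigma_q mulr_sumr.
apply: eq_bigr => i _.
have hi : (i <= m)%N by rewrite -ltnS.
rewrite -{1}(subnKC hi) exprD; ring.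
Qed.
Lemma sigma_opp (f : PS) : sigma_q q (- f) = - sigma_q q f.
Proof. by apply: funext => m; rewrite /sigma_q /= /ps_opp mulrN. Qed.
Lemma sigma_sign e : sigma_q q ((-1 : PS) ^+ e) = (-1) ^+ e.
Proof.
elim: e => [|e IH]; first by rewrite !expr0 sigma1.
by rewrite !exprS sigma_mul IH sigma_opp sigma1.
Qed.

Lemma scale_opp c (g : PS) : ps_scale (- c) g = - ps_scale c g.
Proof. apply: funext => m; change (- c * g m = - (c * g m)); by rewrite mulNr. Qed.

Lemma scale_sign e (g : PS) : ps_scale ((-1) ^+ e) g = (-1) ^+ e * g.
Proof.
elim: e => [|e IH].
  by rewrite !expr0 mul1r; apply: funext => m; rewrite /ps_scale mul1r.
rewrite [in RHS]exprS -[in RHS]mulrA -IH [in RHS]mulN1r.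
by rewrite exprS mulN1r scale_opp.
Qed.

Lemma size_inv_seq (f : PS) n : size (inv_seq f n) = n.+1.
Proof. by elim: n => [|n IH] //=; rewrite size_rcons IH. Qed.

Lemma nth_inv (f : PS) n j : (j <= n)%N -> nth 0 (inv_seq f n) j = ps_inv f j.
Proof.
elim: n => [|n IH] hj.
  by move: hj; rewrite leqn0 => /eqP ->.
rewrite leq_eqVlt in hj; case/orP: hj => [/eqP -> //|hj].
rewrite /= nth_rcons size_inv_seq hj; exact: IH.
Qed.

Lemma ps_invS (f : PS) n : ps_inv f n.+1 =
  - (f 0%N)^-1 * \sum_(i < n.+1) f i.+1 * ps_inv f (n - i)%N.
Proof.
rewrite /ps_inv /= nth_rcons size_inv_seq ltnn eqxx.
congr (_ * _); apply: eq_bigr => i _; rewrite nth_inv //; exact: leq_subr.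
Qed.

Lemma ps_invK (f : PS) : f 0%N != 0 -> ps_inv f * f = 1.
Proof.
move=> f0; rewrite mulrC; apply: funext => m; rewrite /GRing.mul /= /ps_mul /GRing.one /= /ps_one.
case: m => [|m].
  rewrite big_ord_recl big_ord0 addr0 /= /ps_inv /= mulfV //.
rewrite big_ord_recl /= subn0 ps_invS.
set S := \sum_(i < m.+1) _.
by rewrite mulrA mulrN mulfV // mulN1r addNr.
Qed.

Definition T (k : nat) : PS := Ehat q - Pk q k.

Lemma Pk0 : Pk q 0 = 0.
Proof. by apply: funext => m. Qed.

Lemma T0 : T 0 = Ehat q.
Proof. by rewrite /T Pk0 subr0. Qed.

Lemma Tdiff k : T k - T 0 = - Pk q k.
Proof. by rewrite /T Pk0; ring. Qed.

Lemma Tm k m : T k m = Ehat q m - Pk q k m.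
Proof. by []. Qed.

Lemma TS k : Xs * sigma_q q (T k) = - T k.+1.
Proof.
rewrite -(expr1 Xs) -xpowE.
apply: funext => m.
change (ps_xpow 1 (sigma_q q (T k)) m = - T k.+1 m).
rewrite /ps_xpow /sigma_q !Tm /Ehat /Pk.
case: m => [|m].
  rewrite /= !expr0; ring.
rewrite subn1 /= ltnS half_succ exprD exprS.
case: (m < k)%N; ring.
Qed.

Fixpoint dl (a k : nat) : seq nat :=
  match k with 0 => [::] | k'.+1 => (a + k')%N :: dl a k' end.

Lemma dl_rcons k : dl 0 k.+1 = rcons (dl 1 k) 0%N.
Proof. by elim: k => [|k IH] //=; rewrite -IH add1n. Qed.

Lemma dl_succ a k : map succn (dl a k) = dl a.+1 k.
Proof. by elim: k => [|k IH] //=; rewrite IH addSn. Qed.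

Definition Lm k := map T (dl 0 k.+1).

Lemma hs_Lm k i : hs (Lm k) i = hs (T 0 :: map T (dl 1 k)) i.
Proof. by rewrite /Lm dl_rcons map_rcons hs_rcons. Qed.

Lemma hs_LmS k i : hs (Lm k.+1) i = hs (T k.+1 :: T 0 :: map T (dl 1 k)) i.
Proof.
rewrite /Lm.
have -> : dl 0 k.+2 = k.+1 :: dl 0 k.+1 by rewrite /= add0n.
rewrite map_cons; apply: hs_cons_congr => j.
by rewrite dl_rcons map_rcons hs_rcons.
Qed.

Lemma step k i e :
  Xs ^+ i.+1 * sigma_q q ((-1) ^+ e * hs (Lm k) i.+1)
  - (-1) ^+ i.+1 * ((-1) ^+ e * hs (Lm k) i.+1)
  = (-1) ^+ (e + i) * Pk q k.+1 * hs (Lm k.+1) i.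
Proof.
rewrite sigma_mul sigma_sign.
rewrite (@hs_morph _ (sigma_q q) sigma0 sigma1 sigma_add sigma_mul).
rewrite mulrCA -hs_scale -map_comp.
have -> : map ((fun t => Xs * t) \o sigma_q q) (Lm k)
        = map (fun t => -1 * t) (map T (dl 1 k.+1)).
  rewrite /Lm -dl_succ -!map_comp; apply: eq_map => j /=.
  by rewrite TS mulN1r.
rewrite hs_scale.
have -> : dl 1 k.+1 = k.+1 :: dl 1 k by rewrite /= add1n.
rewrite map_cons.
rewrite (hs_Lm k i.+1) hs_LmS.
set A := hs (T k.+1 :: _) i.+1.
set B := hs (T 0 :: _) i.+1.
have D : A - B = (T k.+1 - T 0) * hs (T k.+1 :: T 0 :: map T (dl 1 k)) i.
  exact: hs_delta.
rewrite Tdiff in D.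
transitivity ((-1) ^+ e * (-1) ^+ i.+1 * (A - B)); first by ring.
rewrite D exprD exprS; ring.
Qed.

End Main.

Lemma sign2 (R : comNzRingType) a b : (-1 : R) ^+ (a + b + b) = (-1) ^+ a.
Proof. by rewrite -addnA addnn -muln2 exprD exprM sqrr_sign mulr1. Qed.

Section Final.
Variable C : numClosedFieldType.
Variable q : C.
Local Notation PS := (ps C).

Lemma Ehat_pow n : ps_pow (Ehat q) n = Ehat q ^+ n.
Proof. by elim: n => [|n IH] //=; rewrite exprS -IH. Qed.

Lemma mulE' (a b : PS) : ps_mul a b = a * b. Proof. by []. Qed.
Lemma addE' (a b : PS) : ps_add a b = a + b. Proof. by []. Qed.

Lemma Pk_0 k : Pk q k.+1 0%N != 0.
Proof. by rewrite /Pk /= expr0 mul1r oner_eq0. Qed.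

Lemma inv_fold n k : (k < n)%N ->
  foldr (factor q n) (ps_pow (Ehat q) n) (iota (n - k).+1 k)
  = (-1) ^+ ((n * n.-1)./2 + ((n - k) * (n - k).-1)./2) * hs (Lm q k) (n - k).
Proof.
elim: k => [|k IH] hk.
  have -> : foldr (factor q n) (ps_pow (Ehat q) n) (iota (n - 0).+1 0) = ps_pow (Ehat q) n by [].
  rewrite subn0 Ehat_pow.
  have -> : Lm q 0 = [:: T q 0] by [].
  by rewrite hs_single T0 -signr_odd oddD addbb expr0 mul1r.
have [i hi] : exists i, (n - k = i.+2)%N by exists (n - k - 2)%N; lia.
have hi1 : (n - k.+1 = i.+1)%N by lia.
rewrite hi1.
have -> : foldr (factor q n) (ps_pow (Ehat q) n) (iota i.+2 k.+1)
  = factor q n i.+2 (foldr (factor q n) (ps_pow (Ehat q) n) (iota i.+3 k)) by [].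
have := IH (ltnW hk); rewrite hi => ->.
rewrite /factor (_ : (i.+2 == 1%N) = false) //.
rewrite scale_opp scale_sign xpowE (_ : (n + 1 - i.+2 = k.+1)%N); last by lia.
rewrite mulE' addE'.
rewrite (step q k i.+1).
rewrite [i.+2.-1]/= half_succ addnA sign2.
set s := (-1) ^+ _. set H := hs _ _.
transitivity (s * H * (ps_inv (Pk q k.+1) * Pk q k.+1)); first by ring.
by rewrite ps_invK ?Pk_0 // mulr1.
Qed.

End Final.

Theorem mainTheorem9 (C : numClosedFieldType) (q : C) (hq : q != 0)
  (n : nat) (hn : (2 <= n)%N) :
  big_operator q n (ps_pow (Ehat q) n)
  = ps_scale ((-1) ^+ (n * n.-1)./2) (Pk q n).
Proof.
have hk : (n.-1 < n)%N by lia.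
have := inv_fold q hk.
rewrite (_ : (n - n.-1 = 1)%N); last by lia.
move=> H.
rewrite /big_operator.
have -> : iota 1 n = 1%N :: iota 2 n.-1 by case: n hn {hk H} => [|n'].
have -> : foldr (factor q n) (ps_pow (Ehat q) n) (1%N :: iota 2 n.-1)
  = factor q n 1 (foldr (factor q n) (ps_pow (Ehat q) n) (iota 2 n.-1)) by [].
rewrite H /factor eqxx addE' xpowE scale_sign.
set V := (_ * hs _ _).
transitivity (Xs C ^+ 1 * sigma_q q V - (-1) ^+ 1 * V); first by rewrite expr1 mulN1r opprK.
rewrite /V step (prednK (ltn_trans (isT : (0 < 1)%N) hn)) hs0 mulr1 /= !addn0.
by [].
Qed.
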